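(* Let $\delta\ge3$. A $\delta$-PHO $K^{(\delta)}$ is separable within a rotation of Cartesian coordinates if and only if $\operatorname{rank}\mathcal M(K^{(\delta)})=1$.
   Context: A $\delta$-PHO is the Hamiltonian $K^{(\delta)}(q,p)=\tfrac12\sum_{j=1}^2(p_j^2+q_j^2)+V^{(\delta)}(q)$ on $\mathbb R^4$, with $V^{(\delta)}(q)=\sum_{h=0}^{\delta}v^{(\delta)}_h\binom{\delta}{h}q_1^hq_2^{\delta-h}$, real coefficients, $V^{(\delta)}\not\equiv0$. $\mathcal M(K^{(\delta)})$ is the $2\times(\delta-1)$ matrix whose $(h+1)$-st column, $h=0,\dots,\delta-2$, is $\big(v^{(\delta)}_h-v^{(\delta)}_{h+2},\ 2v^{(\delta)}_{h+1}\big)^T$. With $\sigma(\psi)=\begin{pmatrix}\cos\psi&-\sin\psi\\ \sin\psi&\cos\psi\end{pmatrix}$, the $\delta$-PHO is separable within a rotation of Cartesian coordinates if there exist $\psi\in[0,2\pi)$ and reals $(\tilde v_0,\tilde v_\delta)\ne(0,0)$ with $V^{(\delta)}(\sigma(\psi)^{-1}\tilde q)=\tilde v_0\tilde q_2^{\delta}+\tilde v_\delta\tilde q_1^{\delta}$ for all $\tilde q\in\mathbb R^2$. *)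

(* Defs.v *)
From HB Require Import structures.
From mathcomp Require Import all_boot all_order all_algebra.
From mathcomp Require Import reals trigo.
Set Implicit Arguments. Unset Strict Implicit. Unset Printing Implicit Defensive.
Import Order.TTheory GRing.Theory Num.Theory.
Local Open Scope ring_scope.

Section PHO.
Variable R : realType.

Definition qc1 (q : 'cV[R]_2) : R := q ord0 ord0.
Definition qc2 (q : 'cV[R]_2) : R := q ord_max ord0.

(* V^(delta)(q) = sum_{h=0}^{delta} v_h binom(delta,h) q_1^h q_2^(delta-h);
   coefficients v_0..v_delta given by v : nat -> R (other values irrelevant) *)
Definition PHO_V (delta : nat) (v : nat -> R) (q : 'cV[R]_2) : R :=
  \sum_(h < delta.+1) v h * ('C(delta, h))%:R * qc1 q ^+ h * qc2 q ^+ (delta - h).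

(* the 2 x (delta-1) matrix M(K^(delta)); column h+1 (h = 0..delta-2) is
   (v_h - v_{h+2}, 2 v_{h+1})^T *)
Definition PHO_M (delta : nat) (v : nat -> R) : 'M[R]_(2, delta.-1) :=
  \matrix_(i < 2, j < delta.-1)
     (if i == ord0 then v j - v j.+2 else 2 * v j.+1).

Definition sigma_rot (psi : R) : 'M[R]_2 :=
  \matrix_(i < 2, j < 2)
    (if i == ord0 then (if j == ord0 then cos psi else - sin psi)
     else (if j == ord0 then sin psi else cos psi)).

Definition separable_within_rotation (delta : nat) (v : nat -> R) : Prop :=
  exists psi : R, 0 <= psi < 2 * pi /\
  exists vt0 vtd : R, (vt0, vtd) <> (0, 0) /\
    forall qt : 'cV[R]_2,
      PHO_V delta v (invmx (sigma_rot psi) *m qt)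
      = vt0 * qc2 qt ^+ delta + vtd * qc1 qt ^+ delta.

End PHO.

(* Main.v *)
Require Import Defs.
From HB Require Import structures.
From mathcomp Require Import all_boot all_order all_algebra.
From mathcomp Require Import reals trigo.
From mathcomp Require Import ring lra zify.
Set Implicit Arguments. Unset Strict Implicit. Unset Printing Implicit Defensive.
Import Order.TTheory GRing.Theory Num.Theory.
Local Open Scope ring_scope.

Section Aux.
Variable R : realType.

Definition mkq (x y : R) : 'cV[R]_2 := \matrix_(i < 2, j < 1) (if i == ord0 then x else y).
Lemma mkq1 x y : qc1 (mkq x y) = x. Proof. by rewrite /qc1 mxE. Qed.
Lemma mkq2 x y : qc2 (mkq x y) = y. Proof. by rewrite /qc2 mxE. Qed.

Lemma sig1 psi (q : 'cV[R]_2) : qc1 (sigma_rot psi *m q) = cos psi * qc1 q - sin psi * qc2 q.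
Proof.
rewrite /qc1 /qc2 mxE !big_ord_recl big_ord0 !mxE /=.
have -> : lift ord0 ord0 = ord_max :> 'I_2 by apply/val_inj.
rewrite /=; ring.
Qed.

Lemma sig2 psi (q : 'cV[R]_2) : qc2 (sigma_rot psi *m q) = sin psi * qc1 q + cos psi * qc2 q.
Proof.
rewrite /qc1 /qc2 mxE !big_ord_recl big_ord0 !mxE /=.
have -> : lift ord0 ord0 = ord_max :> 'I_2 by apply/val_inj.
rewrite /=; ring.
Qed.

Lemma sig_unit (psi : R) : sigma_rot psi \in unitmx.
Proof.
suff H : sigma_rot psi *m sigma_rot (- psi) = 1%:M by case: (mulmx1_unit H).
apply/matrixP => i j; rewrite !mxE !big_ord_recl big_ord0 !mxE /= cosN sinN.
have h := cos2Dsin2 psi.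
case: i => [[|[|//]] Hi]; case: j => [[|[|//]] Hj] /=; rewrite /=; nra.
Qed.


Definition wf (d : nat) (A B c s : R) (h : nat) : R :=
  A * s ^+ h * c ^+ (d - h) + B * c ^+ h * (- s) ^+ (d - h).

Lemma V_binom d A B c s q :
  PHO_V d (wf d A B c s) q =
  A * (s * qc1 q + c * qc2 q) ^+ d + B * (c * qc1 q - s * qc2 q) ^+ d.
Proof.
rewrite /PHO_V; set x := qc1 q; set y := qc2 q.
rewrite (addrC (s * _)).
have e : c * x - s * y = (- s) * y + c * x by ring.
rewrite e.
Timeout 20 rewrite !exprDn !mulr_sumr.
Timeout 20 rewrite -big_split /=. 
Timeout 20 apply: eq_bigr => i _.
Timeout 20 rewrite /wf !exprMn.
Timeout 30 ring.
Qed.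

Lemma V_ext d (v w : nat -> R) :
  (forall q, PHO_V d v q = PHO_V d w q) -> forall h, (h <= d)%N -> v h = w h.
Proof.
move=> H h hd.
pose p := \poly_(i < d.+1) ((v i - w i) * ('C(d, i))%:R).
have Hp : forall x, p.[x] = 0.
  move=> x; rewrite horner_poly.
  transitivity (PHO_V d v (mkq x 1) - PHO_V d w (mkq x 1)); last by rewrite H subrr.
  rewrite /PHO_V -sumrB; apply: eq_bigr => i _; rewrite mkq1 mkq2 expr1n; ring.
have p0 : p = 0.
  apply: (@roots_geq_poly_eq0 _ p [seq i%:R | i <- iota 0 d.+1]).
  - by apply/allP => r _; rewrite /root Hp.
  - rewrite map_inj_uniq ?iota_uniq // => a b /eqP; rewrite eqr_nat => /eqP //.
  - by rewrite size_map size_iota size_poly.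
have := congr1 (fun p : {poly R} => p`_h) p0.
rewrite coef_poly coef0 ltnS hd => /eqP; rewrite mulf_eq0 pnatr_eq0 eqn0Ngt bin_gt0 hd orbF subr_eq0.
by move/eqP.
Qed.


Lemma M0_V n (v : nat -> R) : PHO_M n.+3 v = 0 -> forall q, PHO_V n.+3 v q = 0.
Proof.
move=> H q.
have E : forall j, (j < n.+2)%N -> v j = v j.+2 /\ v j.+1 = 0.
  move=> j hj.
  have := congr1 (fun M : 'M[R]_(2, n.+2) => M ord0 (Ordinal hj)) H.
  have := congr1 (fun M : 'M[R]_(2, n.+2) => M ord_max (Ordinal hj)) H.
  rewrite !mxE /= => h1 h2; split; [by apply/eqP; rewrite -subr_eq0 h2|].
  by move/eqP: h1; rewrite mulf_eq0 pnatr_eq0 /= => /eqP.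
have Hall : forall h, (h <= n.+3)%N -> v h = 0.
  move=> [|h] hh.
    by have [-> _] := E 0%N isT; have [_ ->] := E 1%N isT.
  case: (ltnP h n.+2) => hh2; first by have [_ ->] := E h hh2.
  have -> : h = n.+2 by apply/eqP; rewrite eqn_leq hh2 -ltnS hh.
  by have [<- _] := E n.+1 (ltnSn _); have [_ ->] := E n (ltnW (ltnSn _)).
rewrite /PHO_V big1 // => i _; rewrite Hall ?mul0r ?mulr0 //; first by rewrite -ltnS ltn_ord.
Qed.

Lemma sep_coef d (v : nat -> R) : separable_within_rotation d v ->
  exists A B c s, c ^+ 2 + s ^+ 2 = 1 /\ forall h, (h <= d)%N -> v h = wf d A B c s h.
Proof.
case=> psi [_ [A [B [_ H]]]].
exists A, B, (cos psi), (sin psi); split; first exact: cos2Dsin2.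
apply: V_ext => q; rewrite V_binom.
by have := H (sigma_rot psi *m q); rewrite mulKmx ?sig_unit // sig1 sig2.
Qed.

Lemma rank_le1 n (v : nat -> R) A B c s :
  (forall h, (h <= n.+3)%N -> v h = wf n.+3 A B c s h) -> (\rank (PHO_M n.+3 v) <= 1)%N.
Proof.
move=> Hv.
have -> : PHO_M n.+3 v = (\col_(i < 2) (if i == ord0 then c ^+ 2 - s ^+ 2 else 2 * s * c))
   *m (\row_(j < n.+2) (A * s ^+ j * c ^+ (n.+1 - j) - B * c ^+ j * (- s) ^+ (n.+1 - j))).
  apply/matrixP => i j; rewrite !mxE big_ord1 !mxE.
  have hj := ltn_ord j.
  rewrite !Hv; try lia.
  rewrite /wf.
  have -> : (n.+3 - j = (n.+1 - j).+2)%N by lia.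
  have -> : (n.+3 - j.+2 = (n.+1 - j))%N by lia.
  have -> : (n.+3 - j.+1 = (n.+1 - j).+1)%N by lia.
  case: i => [[|[|//]] Hi] /=; rewrite !exprS; ring.
by rewrite (leq_trans (mxrankM_maxl _ _)) // rank_leq_col.
Qed.


Lemma V_eq d (v w : nat -> R) : (forall h, (h <= d)%N -> v h = w h) ->
  forall q, PHO_V d v q = PHO_V d w q.
Proof. by move=> H q; apply: eq_bigr => i _; rewrite H // -ltnS ltn_ord. Qed.

Lemma ord2P (a : 'I_2) : a = ord0 \/ a = ord_max.
Proof. by case: a => [[|[|//]] H]; [left|right]; apply/val_inj. Qed.

Lemma minor0 m (M : 'M[R]_(2, m)) : (\rank M <= 1)%N ->
  forall j k, M ord0 j * M ord_max k - M ord0 k * M ord_max j = 0.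
Proof.
move=> Hr j k; apply/eqP; apply: contraTT Hr => hd; rewrite -ltnNge.
pose g := fun l : 'I_2 => if l == ord0 then j else k.
pose N := colsub g M.
pose d := M ord0 j * M ord_max k - M ord0 k * M ord_max j.
pose N' := d^-1 *: (\matrix_(a < 2, b < 2)
   (if a == ord0 then (if b == ord0 then M ord_max k else - M ord0 k)
    else (if b == ord0 then - M ord_max j else M ord0 j)) : 'M[R]_2).
have HN : N *m N' = 1%:M.
  apply/matrixP => a b; rewrite !mxE !big_ord_recl big_ord0 !mxE /= /g /=.
  by case: (ord2P a) => ->; case: (ord2P b) => -> /=; rewrite /d; field.
have [uN _] := mulmx1_unit HN.
have : \rank N = 2%N by rewrite mxrank_unit.
have -> : N = M *m colsub g 1%:M by rewrite mulmx_colsub mulmx1.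
by move=> h2; apply: leq_trans (mxrankM_maxl M (colsub g 1%:M)); rewrite h2.
Qed.

End Aux.

Section Aux2.
Variable R : realType.

Lemma circle (x y : R) : x ^+ 2 + y ^+ 2 = 1 ->
  exists t, 0 <= t <= 2 * pi /\ cos t = x /\ sin t = y.
Proof.
move=> H.
have hx : x \in `[(-1), 1].
  by rewrite in_itv /=; apply/andP; split; nra.
have hx' : -1 <= x <= 1 by move: hx; rewrite in_itv.
have pi0 := @pi_gt0 R.
have sa : sin (acos x) = `|y| by rewrite sin_acos // -sqrtr_sqr; congr Num.sqrt; lra.
have a0 := acos_ge0 hx'; have api := acos_lepi hx'.
case: (lerP 0 y) => hy.
  exists (acos x); split; first by apply/andP; split; lra.
  by rewrite acosK // sa ger0_norm.
exists (- acos x + pi *+ 2); split; first by apply/andP; split; rewrite mulr2n; lra.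
by rewrite cosD2pi sinD2pi cosN sinN acosK // sa ltr0_norm ?opprK.
Qed.

Lemma half_angle (x y : R) : x ^+ 2 + y ^+ 2 = 1 ->
  exists psi, 0 <= psi < 2 * pi /\ cos psi ^+ 2 - sin psi ^+ 2 = x /\ 2 * sin psi * cos psi = y.
Proof.
move=> /circle [t [/andP [t0 t2] [ct st]]].
have pi0 := @pi_gt0 R.
exists (t / 2); split; first by apply/andP; split; lra.
have e : t = t / 2 + t / 2 by field.
split; [rewrite -ct {3}e cosD | rewrite -st {3}e sinD]; ring.
Qed.

End Aux2.

Section Aux3.
Variable R : realType.

Lemma wrec d (A B c s : R) k : (k.+2 <= d)%N ->
  s * c * wf d A B c s k - (c ^+ 2 - s ^+ 2) * wf d A B c s k.+1
   - s * c * wf d A B c s k.+2 = 0.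
Proof.
move=> hk; rewrite /wf.
have -> : (d - k = (d - k.+2).+2)%N by lia.
have -> : (d - k.+1 = (d - k.+2).+1)%N by lia.
rewrite !exprS; ring.
Qed.

Lemma rec_sol n (v : nat -> R) (c s : R) : c ^+ 2 + s ^+ 2 = 1 ->
  (forall k, (k.+2 <= n.+1)%N ->
     s * c * v k - (c ^+ 2 - s ^+ 2) * v k.+1 - s * c * v k.+2 = 0) ->
  exists A B, forall h, (h <= n.+1)%N -> v h = wf n.+1 A B c s h.
Proof.
move=> cs Hr.
have [s0|s0] := eqVneq s 0.
  have c2 : c ^+ 2 = 1 by rewrite -cs s0; ring.
  have cn : c ^+ n.+1 != 0 by rewrite expf_neq0 //; apply/eqP => c0; move: c2; rewrite c0; lra.
  exists (v 0%N / c ^+ n.+1), (v n.+1 / c ^+ n.+1) => h hh.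
  rewrite /wf s0 oppr0 !expr0n /=.
  have [->|h0] := eqVneq h 0%N; first by rewrite subn0 /=; field.
  have [->|hd] := eqVneq h n.+1; first by rewrite subnn /=; field.
  have e2 : (n.+1 - h == 0)%N = false by apply/negbTE; rewrite subn_eq0 -ltnNge ltn_neqAle hd hh.
  rewrite e2 !(mulr0, mul0r, addr0).
  case: h hh h0 hd {e2} => [//|h] hh _ hd.
  have hl : (h.+1 < n.+1)%N by rewrite ltn_neqAle hd hh.
  have E := Hr h hl; rewrite s0 c2 expr0n /= in E; lra.
have [c0|c0] := eqVneq c 0.
  have s2 : s ^+ 2 = 1 by rewrite -cs c0; ring.
  have sn : s ^+ n.+1 != 0 by rewrite expf_neq0 //.
  have sn' : (- s) ^+ n.+1 != 0 by rewrite expf_neq0 // oppr_eq0.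
  exists (v n.+1 / s ^+ n.+1), (v 0%N / (- s) ^+ n.+1) => h hh.
  rewrite /wf c0 !expr0n /=.
  have [->|h0] := eqVneq h 0%N; first by rewrite subn0 /= mulr0 add0r mulr1 divfK.
  have [->|hd] := eqVneq h n.+1; first by rewrite subnn /= mulr1 mulr0 mul0r addr0 divfK.
  have e2 : (n.+1 - h == 0)%N = false by apply/negbTE; rewrite subn_eq0 -ltnNge ltn_neqAle hd hh.
  rewrite e2 !(mulr0, mul0r, addr0).
  case: h hh h0 hd {e2} => [//|h] hh _ hd.
  have hl : (h.+1 < n.+1)%N by rewrite ltn_neqAle hd hh.
  have E := Hr h hl; rewrite c0 s2 expr0n /= in E; lra.
have cn : c ^+ n != 0 by rewrite expf_neq0.
have sn : (- s) ^+ n != 0 by rewrite expf_neq0 // oppr_eq0.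
set A := (c * v 0%N + s * v 1%N) / c ^+ n.
set B := (- s * v 0%N + c * v 1%N) / (- s) ^+ n.
exists A, B.
have base0 : v 0%N = wf n.+1 A B c s 0.
  rewrite /wf subn0 /A /B !exprS -[v 0%N]mul1r -{1}cs; field; by apply/andP.
have base1 : v 1%N = wf n.+1 A B c s 1.
  rewrite /wf subSS subn0 /A /B -[v 1%N]mul1r -{1}cs; field; by apply/andP.
have step : forall h, (h < n.+1)%N -> v h = wf n.+1 A B c s h /\ v h.+1 = wf n.+1 A B c s h.+1.
  elim=> [|h IH] hh; first by [].
  have [IH1 IH2] := IH (ltnW hh); split => //.
  have E := Hr h hh; have W := wrec A B c s hh.
  rewrite IH1 IH2 in E.
  have sc0 : s * c != 0 by rewrite mulf_neq0.
  apply: (mulfI sc0); lra.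
move=> [|h] hh; first exact: base0.
by case: (step h hh).
Qed.

End Aux3.

Unset Implicit Arguments.
Set Strict Implicit.

Theorem mainTheorem3 (R : realType) (delta : nat) (v : nat -> R) :
  (3 <= delta)%N ->
  ~ (forall q : 'cV[R]_2, PHO_V delta v q = 0) ->
  (separable_within_rotation delta v <-> \rank (PHO_M delta v) = 1%N).
Proof.
case: delta => [|[|[|n]]] // _ HV.
split.
- move=> /sep_coef [A [B [c [s [cs Hv]]]]].
  apply/eqP; rewrite eqn_leq (rank_le1 Hv) /= lt0n mxrank_eq0.
  apply/eqP => M0; apply: HV; exact: M0_V.
- move=> Hr.
  set M := PHO_M n.+3 v.
  have Mn0 : M != 0 by rewrite -mxrank_eq0 Hr.
  have [j0 Hj0] : exists j, (M ord0 j != 0) || (M ord_max j != 0).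
    case: (boolP [exists j, (M ord0 j != 0) || (M ord_max j != 0)]) => [/existsP //|].
    rewrite negb_exists => /forallP H; move: Mn0; case/negP; apply/eqP/matrixP => i j.
    move: (H j); rewrite negb_or !negbK => /andP [/eqP h1 /eqP h2].
    by case: (ord2P i) => ->; rewrite [RHS]mxE.
  set al := M ord0 j0; set be := M ord_max j0.
  have pos : 0 < al ^+ 2 + be ^+ 2.
    have h1 := sqr_ge0 al; have h2 := sqr_ge0 be.
    case/orP: Hj0 => h.
      have : 0 < al ^+ 2 by rewrite lt0r sqrf_eq0 h sqr_ge0.
      lra.
    have : 0 < be ^+ 2 by rewrite lt0r sqrf_eq0 h sqr_ge0.
    lra.
  set r := Num.sqrt (al ^+ 2 + be ^+ 2).
  have r0 : 0 < r by rewrite sqrtr_gt0.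
  have rr : r ^+ 2 = al ^+ 2 + be ^+ 2 by rewrite sqr_sqrtr // ltW.
  have xy : (al / r) ^+ 2 + (be / r) ^+ 2 = 1.
    by rewrite !expr_div_n -mulrDl -rr mulfV // expf_neq0 // gt_eqF.
  have [psi [psib [cx sy]]] := half_angle xy.
  have cs := cos2Dsin2 psi.
  have ea : al = r * (cos psi ^+ 2 - sin psi ^+ 2) by rewrite cx mulrC divfK // gt_eqF.
  have eb : be = r * (2 * sin psi * cos psi) by rewrite sy mulrC divfK // gt_eqF.
  have rec : forall k, (k.+2 <= n.+3)%N ->
      sin psi * cos psi * v k - (cos psi ^+ 2 - sin psi ^+ 2) * v k.+1
        - sin psi * cos psi * v k.+2 = 0.
    move=> k hk; have hk' : (k < n.+2)%N by lia.
    have Hm := minor0 (eq_leq Hr) j0 (Ordinal hk').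
    rewrite -/al -/be /M !mxE /= in Hm.
    rewrite ea eb in Hm.
    have r2 : r * 2 != 0 by rewrite mulf_neq0 ?gt_eqF // pnatr_eq0.
    apply: (mulfI r2); rewrite mulr0 -[RHS]oppr0 -[in RHS]Hm; ring.
  have [A [B Hv]] := rec_sol cs rec.
  exists psi; split => //; exists A, B; split.
    case=> A0 B0; apply: HV => q; rewrite (V_eq Hv) V_binom A0 B0; ring.
  move=> qt; rewrite -[in RHS](mulKVmx (sig_unit psi) qt) sig1 sig2 (V_eq Hv) V_binom.
  done.
Qed.
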